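(* Let $\mathcal V\cong\mathbb R^d$ be a finite-dimensional real normed space, $\mathcal X\subseteq\mathcal V$ convex, and $f:\mathcal V\to\mathbb R\cup\{+\infty\}$ proper, lower semicontinuous and convex with $\operatorname{dom} f=\mathcal X$ and nonempty solution set. Let $h$ be a Bregman function on $\mathcal X$ and suppose $f$ is relatively continuous with constant $G$. Then the Bregman residuals $\delta_t$ of AdaMir run with perfect (sub)gradients satisfy $\delta_t^2\le2G^2$ for all $t\ge1$.
   Context: $\mathcal V^*$ denotes the dual space with pairing $\langle\cdot,\cdot\rangle$. For $x\in\operatorname{dom}\partial f$, $\nabla f(x)$ denotes a fixed selection of $\partial f(x)$. A Bregman function on $\mathcal X$ is a convex lower semicontinuous $h:\mathcal V\to\mathbb R\cup\{+\infty\}$ with $\operatorname{dom}\partial h\subseteq\mathcal X\subseteq\operatorname{dom}h$, whose subdifferential admits a continuous selection $\nabla h(x)\in\partial h(x)$ on $\operatorname{dom}\partial h$, and which is $K$-strongly convex for some $K>0$: $h(x')\ge h(x)+\langle\nabla h(x),x'-x\rangle+\frac K2\|x'-x\|^2$ for all $x,x'\in\operatorname{dom}\partial h$. Bregman divergence: $D(p,x)=h(p)-h(x)-\langle\nabla h(x),p-x\rangle$; prox-mapping: $P_x(y)=\arg\min_{x'\in\mathcal X}\{\langle y,x-x'\rangle+D(x',x)\}$ for $x\in\operatorname{dom}\partial h$, $y\in\mathcal V^*$. AdaMir with perfect gradients: pick $x_0\neq x_1$ in $\operatorname{dom}\partial h$, $\delta_0=[D(x_0,x_1)+D(x_1,x_0)]^{1/2}$.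 For $t=1,2,\dots$: $\gamma_t=\big(\sum_{s=0}^{t-1}\delta_s^2\big)^{-1/2}$, $x_{t+1}=P_{x_t}(-\gamma_t\nabla f(x_t))$, $\delta_t=[D(x_t,x_{t+1})+D(x_{t+1},x_t)]^{1/2}/\gamma_t$. $f$ is relatively continuous with constant $G>0$ if $f(x)-f(x')\le\langle\nabla f(x),x-x'\rangle\le G\sqrt{2D(x',x)}$ for all $x\in\operatorname{dom}\partial h$, $x'\in\operatorname{dom}h$. *)

(* Defs.v *)
From HB Require Import structures.
From mathcomp Require Import all_boot all_order all_algebra.
From mathcomp Require Import all_classical all_reals all_analysis.
Set Implicit Arguments. Unset Strict Implicit. Unset Printing Implicit Defensive.
Import Order.TTheory GRing.Theory Num.Theory.
Import numFieldNormedType.Exports.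
Local Open Scope classical_set_scope.
Local Open Scope ring_scope.

(* The space V = R^d is modelled as row vectors 'rV[R]_d (with its canonical,
   finite-dimensional topology); the dual V^* is identified with 'rV[R]_d as
   well, via the pairing <y, x> = sum_i y_i x_i. *)
Definition pair (R : realType) (d : nat) (y x : 'rV[R]_d) : R :=
  \sum_(i < d) y ord0 i * x ord0 i.

Definition is_norm (R : realType) (d : nat) (nrm : 'rV[R]_d -> R) : Prop :=
  (forall x y, nrm (x + y) <= nrm x + nrm y) /\
  (forall (a : R) x, nrm (a *: x) = `|a| * nrm x) /\
  (forall x, nrm x = 0 -> x = 0).

Definition convex_fun (R : realType) (d : nat) (f : 'rV[R]_d -> \bar R) : Prop :=
  forall (x y : 'rV[R]_d) (l : R), 0 <= l <= 1 ->
    (f (l *: x + (1 - l) *: y)%R <= l%:E * f x + (1 - l)%:E * f y)%E.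

Definition edom (R : realType) (d : nat) (f : 'rV[R]_d -> \bar R) : set 'rV[R]_d :=
  [set x | (f x < +oo)%E].

Definition proper_fun (R : realType) (d : nat) (f : 'rV[R]_d -> \bar R) : Prop :=
  (forall x, f x != -oo%E) /\ (exists x, f x \is a fin_num).

Definition subdiff (R : realType) (d : nat) (f : 'rV[R]_d -> \bar R) (x : 'rV[R]_d)
  : set 'rV[R]_d :=
  [set g | f x \is a fin_num /\
           forall x', (f x + (pair g (x' - x)%R)%:E <= f x')%E].

Definition dom_subdiff (R : realType) (d : nat) (f : 'rV[R]_d -> \bar R) : set 'rV[R]_d :=
  [set x | subdiff f x !=set0].

Definition bregman_fun (R : realType) (d : nat) (nrm : 'rV[R]_d -> R)
  (X : set 'rV[R]_d) (h : 'rV[R]_d -> \bar R) (gradh : 'rV[R]_d -> 'rV[R]_d)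
  (K : R) : Prop :=
  (forall x, h x != -oo%E) /\
  convex_fun h /\ lower_semicontinuous h /\
  dom_subdiff h `<=` X /\ X `<=` edom h /\
  (forall x, dom_subdiff h x -> subdiff h x (gradh x)) /\
  {within dom_subdiff h, continuous gradh} /\
  0 < K /\
  (forall x x', dom_subdiff h x -> dom_subdiff h x' ->
     (h x' >= h x + (pair (gradh x) (x' - x)%R)%:E + (K / 2 * nrm (x' - x)%R ^+ 2)%:E)%E).

(* Bregman divergence D(p, x); it is only ever evaluated at points of dom h
   (where h is finite), so the real part `fine` is exact there. *)
Definition breg (R : realType) (d : nat) (h : 'rV[R]_d -> \bar R)
  (gradh : 'rV[R]_d -> 'rV[R]_d) (p x : 'rV[R]_d) : R :=
  fine (h p) - fine (h x) - pair (gradh x) (p - x).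

Definition is_prox (R : realType) (d : nat) (X : set 'rV[R]_d) (h : 'rV[R]_d -> \bar R)
  (gradh : 'rV[R]_d -> 'rV[R]_d) (x y xp : 'rV[R]_d) : Prop :=
  X xp /\ forall x', X x' ->
    pair y (x - xp) + breg h gradh xp x <= pair y (x - x') + breg h gradh x' x.

Definition rel_continuous (R : realType) (d : nat) (f h : 'rV[R]_d -> \bar R)
  (gradf gradh : 'rV[R]_d -> 'rV[R]_d) (G : R) : Prop :=
  forall x x', dom_subdiff h x -> edom h x' ->
    (f x - f x' <= (pair (gradf x) (x - x')%R)%:E)%E /\
    pair (gradf x) (x - x') <= G * Num.sqrt (2 * breg h gradh x' x).

(* Main.v *)
Require Import Defs.
From HB Require Import structures.
From mathcomp Require Import all_boot all_order all_algebra.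
From mathcomp Require Import all_classical all_reals all_analysis.
From mathcomp Require Import ring lra.
Import Order.TTheory GRing.Theory Num.Theory.
Import numFieldNormedType.Exports.
Local Open Scope classical_set_scope.
Local Open Scope ring_scope.
Set Implicit Arguments. Unset Strict Implicit. Unset Printing Implicit Defensive.
Section P.
Context {R : realType} {d : nat}.
Implicit Types (x y u v p : 'rV[R]_d).

Lemma pairDl y1 y2 x : pair (y1 + y2) x = pair y1 x + pair y2 x.
Proof. rewrite /pair -big_split; apply: eq_bigr => i _; rewrite !mxE /= mulrDl. done. Qed.
Lemma pairDr y x1 x2 : pair y (x1 + x2) = pair y x1 + pair y x2.
Proof. rewrite /pair -big_split; apply: eq_bigr => i _; rewrite !mxE /= mulrDr. done. Qed.
Lemma pairZl (a : R) y x : pair (a *: y) x = a * pair y x.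
Proof. rewrite /pair mulr_sumr; apply: eq_bigr => i _; rewrite !mxE /= mulrA. done. Qed.
Lemma pairZr (a : R) y x : pair y (a *: x) = a * pair y x.
Proof. rewrite /pair mulr_sumr; apply: eq_bigr => i _; rewrite !mxE /= mulrCA. done. Qed.
Lemma pairNl y x : pair (- y) x = - pair y x.
Proof. by rewrite -scaleN1r pairZl mulN1r. Qed.
Lemma pairNr y x : pair y (- x) = - pair y x.
Proof. by rewrite -scaleN1r pairZr mulN1r. Qed.
Lemma pairBl y1 y2 x : pair (y1 - y2) x = pair y1 x - pair y2 x.
Proof. by rewrite pairDl pairNl. Qed.
Lemma pairBr y x1 x2 : pair y (x1 - x2) = pair y x1 - pair y x2.
Proof. by rewrite pairDr pairNr. Qed.
Lemma pair0r y : pair y 0 = 0.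
Proof. by rewrite /pair big1 // => i _; rewrite mxE mulr0. Qed.
Lemma pairC y x : pair y x = pair x y.
Proof. by rewrite /pair; apply: eq_bigr => i _; rewrite mulrC. Qed.
Lemma pair_ge0 u : 0 <= pair u u.
Proof. by rewrite /pair sumr_ge0 // => i _; rewrite -expr2 sqr_ge0. Qed.
Lemma pair_sq u i : u ord0 i ^+ 2 <= pair u u.
Proof.
rewrite /pair (bigD1 i) //= -expr2 lerDl sumr_ge0 // => j _.
by rewrite -expr2 sqr_ge0.
Qed.
Lemma pair_bound p u (m : R) : (forall i, `|u ord0 i| <= m) ->
  `|pair p u| <= (\sum_i `|p ord0 i|) * m.
Proof.
move=> H; rewrite /pair mulr_suml; apply: le_trans (ler_norm_sum _ _ _) _.
apply: ler_sum => i _; rewrite normrM ler_wpM2l //.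
Qed.
End P.
Lemma pair_expand (R : realType) d (u s : 'rV[R]_d) (c : R) :
  pair (u + c *: s) (u + c *: s) = pair u u + 2 * c * pair s u + c ^+ 2 * pair s s.
Proof.
rewrite !pairDl !pairDr !pairZl !pairZr (pairC u s). 
rewrite (_ : 2 = 1 + 1 :> R) //; ring.
Qed.

Lemma lim_t (R : realType) (a b c : R) : 0 <= c ->
  (forall t, 0 < t -> t <= 1 -> a <= b + t * c) -> a <= b.
Proof.
move=> c0 H; rewrite leNgt; apply/negP => ba.
have p : 0 < a - b + c by lra.
set t := (a - b) / (a - b + c).
have t0 : 0 < t by rewrite divr_gt0 // subr_gt0.
have t1 : t <= 1 by rewrite ler_pdivrMr // mul1r lerDl.
have key : t * c < a - b.
  rewrite /t mulrAC ltr_pdivrMr //. have : 0 < a - b by rewrite subr_gt0. nra.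
have := H t t0 t1; lra.
Qed.
Lemma fo_subdiff (R : realType) d (h : 'rV[R]_d -> \bar R) (y z : 'rV[R]_d) (m : R) :
  convex_fun h -> (forall x, h x != -oo%E) -> 0 < m -> h z \is a fin_num ->
  (forall w, (h z + (pair (z - y) (z - y) * m / 2)%:E <= h w + (pair (w - y) (w - y) * m / 2)%:E)%E) ->
  subdiff h z (m *: (y - z)).
Proof.
move=> hconv hnm m0 hzf H; split => // w.
case hw: (h w) => [r| |]; last by have := hnm w; rewrite hw.
2: by rewrite leey.
rewrite -(fineK hzf) -EFinD lee_fin.
set hz := fine (h z).
apply: (@lim_t _ _ _ (pair (w - z) (w - z) * m / 2)).
  by rewrite mulr_ge0 ?divr_ge0 ?mulr_ge0 ?pair_ge0 // ltW.
move=> t t0 t1.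
have cv := hconv w z t.
rewrite ltW //= t1 /= in cv; have {}cv := cv isT.
set zt := t *: w + (1 - t) *: z in cv.
rewrite hw -(fineK hzf) -!EFinM -EFinD in cv.
have hztf : h zt \is a fin_num.
  rewrite fin_numE (hnm zt) /=; apply/eqP => e; move: cv; by rewrite e leNgt ltey.
have H1 := H zt.
rewrite -(fineK hztf) -(fineK hzf) -!EFinD lee_fin in H1.
rewrite -(fineK hztf) lee_fin in cv.
have ez : zt - y = (z - y) + t *: (w - z).
  by apply/rowP => i; rewrite /zt !mxE; ring.
rewrite ez pair_expand in H1.
have -> : pair (m *: (y - z)) (w - z) = - (m * pair (w - z) (z - y)).
  rewrite pairZl pairC (_ : y - z = - (z - y)); last by rewrite opprB.
  by rewrite pairNr mulrN.
rewrite -/hz in H1 cv *.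
set hzt := fine (h zt) in H1 cv.
set q0 := pair (z - y) (z - y) in H1 *.
set b := pair (w - z) (z - y) in H1 *.
set q1 := pair (w - z) (w - z) in H1 *.
have : 0 <= t * (r - hz + m * b + t * (q1 * m / 2)).
  nra.
rewrite pmulr_rge0 //; lra.
Qed.
Lemma seq_min (R : realType) (T : eqType) (F : T -> \bar R) (s : seq T) (w0 : T) :
  w0 \in s -> exists2 w, w \in s & forall w', w' \in s -> (F w <= F w')%E.
Proof.
elim: s w0 => [//|a s IH] w0 _.
have [s0|] := boolP (s == [::]).
  exists a; first by rewrite mem_head.
  by move=> w'; rewrite (eqP s0) inE => /eqP ->.
case: s IH => [//|b s] IH _.
have [w ws Hw] := IH b (mem_head _ _).
have [Faw|Fwa] := leP (F a) (F w).
  exists a; first exact: mem_head.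
  move=> w'; rewrite inE => /orP[/eqP->//|/Hw]; exact: le_trans.
exists w; first by rewrite inE ws orbT.
move=> w'; rewrite inE => /orP[/eqP->|/Hw//]; exact: ltW.
Qed.

Lemma lsc_min (R : realType) d (Psi : 'rV[R]_d -> \bar R) (S : set 'rV[R]_d) :
  compact S -> S !=set0 -> (forall w, S w -> Psi w \is a fin_num) ->
  lower_semicontinuous Psi -> exists2 z, S z & forall w, S w -> (Psi z <= Psi w)%E.
Proof.
move=> cS [w0 Sw0] fin lsc.
apply: contrapT => nomin.
have cov : S `<=` cover S (fun w' => [set w | (Psi w' < Psi w)%E]).
  move=> w Sw; apply: contrapT => nw; apply: nomin; exists w => // w' Sw'.
  rewrite leNgt; apply/negP => lt; apply: nw; by exists w'.
have op : forall w', S w' -> open [set w | (Psi w' < Psi w)%E].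
  move=> w' Sw'; have := (proj1 (lower_semicontinuousP Psi) lsc (fine (Psi w'))).
  by rewrite fineK //; exact: fin.
have := cS; rewrite compact_cover => /(_ _ S _ op cov).
move=> [D' sD' cov'].
have [i Di _] := cov' w0 Sw0.
have [w wD Hw] := @seq_min _ _ Psi _ _ Di.
have Sw : S w by have := sD' _ wD; rewrite inE.
have [j Dj /= ltj] := cov' w Sw.
have := Hw j Dj; rewrite leNgt ltj //.
Qed.
Lemma q_cont (R : realType) d (y : 'rV[R]_d) : continuous (fun w : 'rV[R]_d => pair (w - y) (w - y)).
Proof.
rewrite /pair.
apply: continuous_big => [|i _]; first exact: add_continuous.
have ci : continuous (fun w : 'rV[R]_d => (w - y) ord0 i).
  have -> : (fun w : 'rV[R]_d => (w - y) ord0 i) = (fun w => w ord0 i - y ord0 i).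
    by apply: funext => z; rewrite !mxE.
  move=> w; have H := (cvgB (@coord_continuous R 1 d ord0 i w) (cvg_cst (y ord0 i))). exact: H.
move=> w; exact: (cvgM (ci w) (ci w)).
Qed.
Lemma lsc_add (R : realType) d (h : 'rV[R]_d -> \bar R) (c : 'rV[R]_d -> R) :
  lower_semicontinuous h -> continuous c ->
  lower_semicontinuous (fun w => (h w + (c w)%:E)%E).
Proof.
move=> lh cc x a H.
have [b' [bb' hb']] : exists b', a - c x < b' /\ (b'%:E < h x)%E.
  move: H; case: (h x) => [r| |] /=.
  - rewrite -EFinD lte_fin => H; exists ((a - c x + r) / 2).
    rewrite lte_fin; split; lra.
  - by move=> _; exists (a - c x + 1); split; [lra| exact: ltry].
  - by [].
have [V1 nV1 HV1] := lh x b' hb'.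
have e0 : 0 < b' - (a - c x) by lra.
have := cvgr_dist_lt _ _ (cc x) _ e0.
move=> /(_ (nbhs_filter x)) nV2.
exists (V1 `&` [set w | `|c x - c w| < b' - (a - c x)]).
  exact: (filterI nV1 nV2).
move=> w [/HV1 hw /= cw].
move: hw; case: (h w) => [r| |] //=.
  rewrite !lte_fin => hr.
  move: cw; rewrite ltr_norml => /andP[c1 c2]; lra.
move=> _; by rewrite /= ltry.
Qed.
Lemma coer_bound (R : realType) d (h : 'rV[R]_d -> \bar R) (x0 s0 y w : 'rV[R]_d) (mu : R) :
  (forall x, h x != -oo%E) -> subdiff h x0 s0 -> h y \is a fin_num -> 0 < mu -> mu <= 1 ->
  (h w + (pair (w - y) (w - y) * mu^-1 / 2)%:E <= h y)%E ->
  pair (w - y) (w - y) <= 4 * mu * (`|fine (h y) - fine (h x0) - pair s0 (y - x0)| + pair s0 s0).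
Proof.
move=> hnm [hx0f hx0] hyf mu0 mu1 H1.
have hwf : h w \is a fin_num.
  rewrite fin_numE (hnm w) /=; apply/eqP => e; move: H1; rewrite e /=.
  by rewrite leNgt -(fineK hyf) ltey.
rewrite -(fineK hwf) -(fineK hyf) -EFinD lee_fin in H1.
have H2 := hx0 w. rewrite -(fineK hwf) -(fineK hx0f) -EFinD lee_fin in H2.
have ew : w - x0 = (w - y) + (y - x0) by rewrite addrA subrK.
rewrite ew pairDr in H2.
have H3 := pair_ge0 ((w - y) + (2 * mu) *: s0). rewrite pair_expand in H3.
have mum : mu^-1 * mu = 1 by rewrite mulVf // gt_eqF.
have Q0 := pair_ge0 s0.
set q := pair (w - y) (w - y) in H1 H3 *.
set p := pair s0 (w - y) in H2 H3.
set P := pair s0 (y - x0) in H2 *.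
set Q := pair s0 s0 in H3 Q0 *.
set A := fine (h y) - fine (h x0) - P.
have H1' : q * mu^-1 / 2 <= A - p by rewrite /A; lra.
have K1 : q <= 2 * mu * A - 2 * mu * p.
  have := ler_wpM2r (ltW (mulr_gt0 (ltr0n _ 2) mu0)) H1'.
  have -> : q * mu^-1 / 2 * (2 * mu) = q.
    have h2 : (2:R) != 0 by rewrite pnatr_eq0.
    have hm : mu != 0 by rewrite gt_eqF.
    by field.
  lra.
have K2 : q <= 4 * mu * A + 4 * mu ^+ 2 * Q by nra.
have K3 : A <= `|A| := ler_norm A.
have K4 : mu ^+ 2 * Q <= mu * Q.
  rewrite expr2 -mulrA ler_piMl // ?mulr_ge0 // ltW //.
nra.
Qed.
Lemma le1sq (R : realType) (t : R) : 0 <= t -> t <= 1 + t ^+ 2.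
Proof. move=> t0; have := sqr_ge0 (t - 1); rewrite !expr2 => H; nra. Qed.

Lemma density (R : realType) d (h : 'rV[R]_d -> \bar R) (x0 s0 : 'rV[R]_d) :
  convex_fun h -> (forall x, h x != -oo%E) -> lower_semicontinuous h -> subdiff h x0 s0 ->
  forall y, h y \is a fin_num -> forall e, 0 < e ->
  exists z, dom_subdiff h z /\ forall i, `|z ord0 i - y ord0 i| < e.
Proof.
move=> hconv hnm hlsc hs0 y hyf e e0.
pose A := fine (h y) - fine (h x0) - pair s0 (y - x0).
pose Q := pair s0 s0.
pose M := `|A| + Q + 1.
pose e' := Num.min e 1.
have e'0 : 0 < e' by rewrite lt_min e0 ltr01.
have e'1 : e' <= 1 by rewrite ge_min lexx orbT.
have e'e : e' <= e by rewrite ge_min lexx.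
have Q0 : 0 <= Q := pair_ge0 s0.
have M1 : 1 <= M by rewrite /M; have := normr_ge0 A; lra.
pose mu := e' ^+ 2 / (8 * M).
have M8 : 0 < 8 * M by lra.
have mu0 : 0 < mu by rewrite divr_gt0 ?exprn_gt0.
have e'2 : e' ^+ 2 <= 1 by rewrite expr_le1 // ltW.
have mu1 : mu <= 1 by rewrite ler_pdivrMr // mul1r; lra.
pose m := mu^-1.
pose Psi := fun w => (h w + (pair (w - y) (w - y) * m / 2)%:E)%E.
have Psiy : Psi y = h y by rewrite /Psi subrr pair0r !mul0r adde0.
pose Bq := 4 * mu * (`|A| + Q).
have Bqe : Bq < e' ^+ 2.
  have -> : e' ^+ 2 = mu * (8 * M) by rewrite /mu mulrAC -mulrA mulfV ?mulr1 // gt_eqF.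
  have := normr_ge0 A; rewrite /Bq /M; nra.
have coer : forall w, (Psi w <= Psi y)%E -> pair (w - y) (w - y) <= Bq.
  move=> w; rewrite Psiy => H; exact: (coer_bound hnm hs0 hyf mu0 mu1 H).
pose S := [set w | (Psi w <= Psi y)%E].
have Psif : forall w, S w -> Psi w \is a fin_num.
  move=> w Sw; rewrite fin_numE; apply/andP; split.
    by rewrite /Psi; apply: contra (hnm w); rewrite adde_eq_ninfty /= orbF.
  apply/eqP => E; move: Sw; rewrite /S /= E Psiy leNgt -(fineK hyf) ltey //.
have PsiL : lower_semicontinuous Psi.
  apply: lsc_add => // w; have HH := q_cont (y:=y); exact: (cvgMr_tmp (b:=2^-1) (cvgMr_tmp (b:=m) (HH w))).
have cS : compact S.
  apply: bounded_closed_compact.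
    pose B := \sum_i `|y ord0 i| + 1 + Bq.
    have wB : forall w, S w -> `|w| <= B.
      move=> w Sw; rewrite /Num.norm /= mx_normrE; apply: bigmax_le.
        have s0' : 0 <= \sum_i `|y ord0 i| by rewrite sumr_ge0.
        have := normr_ge0 A; rewrite /B /Bq; nra.
      move=> [i j] _ /=; rewrite (ord1 i).
      have H := le_trans (pair_sq _ j) (coer w Sw); rewrite !mxE in H.
      have Hy : `|y ord0 j| <= \sum_i `|y ord0 i|.
        by rewrite (bigD1 j) //= lerDl sumr_ge0.
      have Hw : `|w ord0 j - y ord0 j| <= 1 + Bq.
        have := le1sq (normr_ge0 (w ord0 j - y ord0 j)).
        by rewrite -normrX (ger0_norm (sqr_ge0 _)); lra.
      have := ler_normD (w ord0 j - y ord0 j) (y ord0 j).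
      rewrite subrK /B; lra.
    exists B; split; first exact: num_real.
    move=> M0 BM0 w Sw; apply: le_trans (wB w Sw) (ltW BM0).
  have -> : S = ~` [set w | ((fine (Psi y))%:E < Psi w)%E].
    rewrite /S Psiy; apply/seteqP; split => w /=.
      by rewrite fineK // => H1 H2; move: H1; rewrite leNgt H2.
    by rewrite fineK // => H; rewrite leNgt; apply/negP => H2; exact: H H2.
  apply: open_closedC.
  exact: (proj1 (lower_semicontinuousP Psi) PsiL).
have [z Sz zmin] := lsc_min cS (ex_intro _ y (lexx _)) Psif PsiL.
have zmin' : forall w, (Psi z <= Psi w)%E.
  move=> w; have [Sw|nSw] := pselect (S w); first exact: zmin.
  apply: le_trans Sz _; rewrite leNgt; apply/negP => lt; apply: nSw; exact: ltW.
have hzf : h z \is a fin_num.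
  have := Psif z Sz; rewrite /Psi fin_numD => /andP[] //.
exists z; split.
  exists (m *: (y - z)); apply: fo_subdiff => //; first by rewrite invr_gt0.
move=> i.
have := coer z Sz; move/(le_trans (pair_sq _ i)) => H.
have H2 : (z - y) ord0 i ^+ 2 < e' ^+ 2 by apply: le_lt_trans H Bqe.
rewrite !mxE in H2.
apply: lt_le_trans e'e.
have H3 : `|z ord0 i - y ord0 i| ^+ 2 < e' ^+ 2.
  by rewrite -normrX ger0_norm ?sqr_ge0.
move: H3; rewrite ltr_pXn2r // ?nnegrE ?normr_ge0 ?ltW //.
Qed.
Lemma convE (R : realType) d (X : set 'rV[R]_d) (a b : 'rV[R]_d) (l : R) :
  convex_set X -> X a -> X b -> 0 <= l <= 1 -> X (l *: a + (1 - l) *: b).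
Proof.
move=> cX Xa Xb /andP[l0 l1].
have := cX a b (@Itv01 _ _ l0 l1) (mem_set Xa) (mem_set Xb).
rewrite inE /=. by [].
Qed.
Lemma ballE (R : realType) d (a b : 'rV[R]_d) e :
  ball a e b <-> 0 < e /\ forall i, `|a ord0 i - b ord0 i| < e.
Proof.
rewrite /ball /=. split.
- move=> [e0 H]; split => // i. exact: H.
- move=> [e0 H]; split => // i j; rewrite (ord1 i); exact: H.
Qed.
Lemma cont_r (R : realType) d (D : set 'rV[R]_d) (g : 'rV[R]_d -> 'rV[R]_d) a e :
  {within D, continuous g} -> D a -> 0 < e ->
  exists2 r, 0 < r & forall z, D z -> (forall i, `|a ord0 i - z ord0 i| < r) ->
     forall i, `|g a ord0 i - g z ord0 i| < e.
Proof.
move=> hc Da e0.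
have Hc := proj1 (subspace_continuousP _ _) hc a Da.
have := cvg_ball Hc e0; move=> /(_ (within_filter _ _)) .
rewrite /within /= => H0. have := proj1 (nbhs_ballP _ _) H0. move=> [r r0 Hr].
exists r => // z Dz Hz.
have : ball a r z by apply/ballE; split.
move=> /Hr /(_ Dz) /ballE [_]; exact.
Qed.
Lemma dirder (R : realType) d (h : 'rV[R]_d -> \bar R) (gradh : 'rV[R]_d -> 'rV[R]_d)
  (x0 s0 a b : 'rV[R]_d) :
  convex_fun h -> (forall x, h x != -oo%E) -> lower_semicontinuous h ->
  subdiff h x0 s0 -> (forall x, dom_subdiff h x -> subdiff h x (gradh x)) ->
  {within dom_subdiff h, continuous gradh} ->
  dom_subdiff h a -> h b \is a fin_num ->
  forall eps, 0 < eps -> exists lam, [/\ 0 < lam, lam <= 1,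
    h (a + lam *: (b - a)) \is a fin_num &
    fine (h (a + lam *: (b - a))) - fine (h a) <= lam * (pair (gradh a) (b - a) + eps)].
Proof.
move=> hconv hnm hlsc hs0 hgrad hcont Da hbf eps eps0.
have haf : h a \is a fin_num by have [] := hgrad a Da.
set v := b - a. set ga := gradh a.
pose Nv := \sum_i `|v ord0 i|.
have Nv0 : 0 <= Nv by rewrite sumr_ge0.
pose e1 := Num.min 1 (eps / (Nv + 1)).
have e10 : 0 < e1 by rewrite lt_min ltr01 divr_gt0 //; lra.
have e11 : e1 <= 1 by rewrite ge_min lexx.
have e1e : Nv * e1 <= eps.
  have : e1 <= eps / (Nv + 1) by rewrite ge_min lexx orbT.
  rewrite ler_pdivlMr; last lra.
  nra.
have [r r0 Hr] := cont_r hcont Da e10.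
pose lam := Num.min 1 (r / (2 * (Nv + 1))).
have lam0 : 0 < lam by rewrite lt_min ltr01 divr_gt0 //; lra.
have lam1 : lam <= 1 by rewrite ge_min lexx.
have lamv : forall i, `|lam * v ord0 i| < r / 2.
  move=> i; rewrite normrM (gtr0_norm lam0).
  have vi : `|v ord0 i| <= Nv by rewrite /Nv (bigD1 i) //= lerDl sumr_ge0.
  have : lam <= r / (2 * (Nv + 1)) by rewrite ge_min lexx orbT.
  rewrite ler_pdivlMr; last lra.
  move=> H; have := normr_ge0 (v ord0 i); nra.
set y := a + lam *: v.
have ey : y = lam *: b + (1 - lam) *: a.
  by apply/rowP => i; rewrite /y /v !mxE; ring.
have cv := hconv b a lam; rewrite ltW //= lam1 /= -ey in cv; have {}cv := cv isT.
have hyf : h y \is a fin_num.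
  rewrite fin_numE (hnm y) /=; apply/eqP => E; move: cv.
  by rewrite E -(fineK hbf) -(fineK haf) -!EFinM -EFinD leNgt ltey.
exists lam; split => //.
apply/ler_addgt0Pr => k k0.
pose kap := k / 2.
have kap0 : 0 < kap by rewrite divr_gt0.
have H0 : ((fine (h y) - kap)%:E < h y)%E.
  by rewrite -[X in (_ < X)%E](fineK hyf) lte_fin; lra.
have [V nV HV] := hlsc y (fine (h y) - kap) H0.
have [rho rho0 Hrho] := proj1 (nbhs_ballP _ _) nV.
pose Ng := \sum_i (`|ga ord0 i| + 1).
have Ng0 : 0 <= Ng by rewrite sumr_ge0 // => i _; rewrite addr_ge0.
pose dl := Num.min rho (Num.min (r / 2) (kap / (Ng + 1))).
have dl0 : 0 < dl by rewrite !lt_min rho0 divr_gt0 //= divr_gt0 //; lra.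
have [z [Dz Hz]] := density hconv hnm hlsc hs0 hyf dl0.
have hzV : V z.
  apply: Hrho; apply/ballE; split => // i; rewrite distrC.
  apply: lt_le_trans (Hz i) _; rewrite ge_min lexx //.
have := HV z hzV.
have hzs := hgrad z Dz; have [hzf hzsub] := hzs.
rewrite -(fineK hzf) lte_fin => hz1.
have := hzsub a; rewrite -(fineK hzf) -(fineK haf) -EFinD lee_fin => hz2.
have Hza : forall i, `|a ord0 i - z ord0 i| < r.
  move=> i; have := Hz i; have := lamv i.
  have -> : a ord0 i - z ord0 i = - ((z ord0 i - y ord0 i) + lam * v ord0 i).
    by rewrite /y !mxE; ring.
  rewrite normrN => H1 H2.
  have H3 : `|z ord0 i - y ord0 i| < r / 2 by apply: lt_le_trans H2 _; rewrite !ge_min lexx orbT.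
  have := ler_normD (z ord0 i - y ord0 i) (lam * v ord0 i); lra.
have Hg := Hr z Dz Hza.
set gz := gradh z in Hg hz2.
have ez : a - z = - ((z - y) + lam *: v).
  by apply/rowP => i; rewrite /y !mxE; ring.
rewrite ez pairNr pairDr pairZr in hz2.
have P1 : pair gz v <= pair ga v + eps.
  have : pair gz v = pair ga v + pair v (gz - ga) by rewrite [pair v _]pairC pairBl; ring.
  move=> ->; have := pair_bound v (m:=e1) (u := gz - ga).
  move=> /(_ _) H.
  have H' : `|pair v (gz - ga)| <= Nv * e1.
    apply: H => i; rewrite !mxE distrC; exact: ltW.
  have := ler_norm (pair v (gz - ga)); lra.
have P2 : pair gz (z - y) <= kap.
  have : `|pair gz (z - y)| <= (\sum_i `|gz ord0 i|) * dl.
    apply: pair_bound => i; have -> : (z - y) ord0 i = z ord0 i - y ord0 i by rewrite !mxE.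
    exact: (ltW (Hz i)).
  have S1 : \sum_i `|gz ord0 i| <= Ng.
    apply: ler_sum => i _.
    have := Hg i; have := ler_normD (ga ord0 i) (gz ord0 i - ga ord0 i).
    rewrite addrC subrK distrC => H1 H2. 
    lra.
  have S2 : dl <= kap / (Ng + 1) by rewrite !ge_min lexx !orbT.
  have S3 : (\sum_i `|gz ord0 i|) * dl <= Ng * (kap / (Ng + 1)).
    apply: ler_pM => //; [by rewrite sumr_ge0 | exact: ltW].
  have S4 : Ng * (kap / (Ng + 1)) <= kap.
    rewrite mulrA ler_pdivrMr; last lra.
    nra.
  have := ler_norm (pair gz (z - y)); lra.
have := ler_wpM2l (ltW lam0) P1.
rewrite /kap in hz1 P2 *.
nra.
Qed.
Unset Implicit Arguments.

Theorem lemma1 (R : realType) (d : nat) (nrm : 'rV[R]_d -> R)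
  (X : set 'rV[R]_d) (f h : 'rV[R]_d -> \bar R)
  (gradf gradh : 'rV[R]_d -> 'rV[R]_d) (K G : R)
  (x : nat -> 'rV[R]_d) (gamma delta : nat -> R) :
  is_norm nrm ->
  convex_set X ->
  proper_fun f -> lower_semicontinuous f -> convex_fun f ->
  edom f = X ->
  (exists xs, forall z, (f xs <= f z)%E) ->
  (forall z, dom_subdiff f z -> subdiff f z (gradf z)) ->
  bregman_fun nrm X h gradh K ->
  0 < G -> rel_continuous f h gradf gradh G ->
  (* AdaMir with perfect gradients *)
  x 0%N != x 1%N ->
  (forall t, dom_subdiff h (x t)) ->
  delta 0%N = Num.sqrt (breg h gradh (x 0%N) (x 1%N) + breg h gradh (x 1%N) (x 0%N)) ->
  (forall t, (1 <= t)%N ->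
     gamma t = (Num.sqrt (\sum_(s < t) delta s ^+ 2))^-1) ->
  (forall t, (1 <= t)%N ->
     is_prox X h gradh (x t) (- (gamma t *: gradf (x t))) (x t.+1)) ->
  (forall t, (1 <= t)%N ->
     delta t = Num.sqrt (breg h gradh (x t) (x t.+1) + breg h gradh (x t.+1) (x t))
               / gamma t) ->
  forall t, (1 <= t)%N -> delta t ^+ 2 <= 2 * G ^+ 2.
Proof.
move=> _ cX _ _ _ _ _ _ hB G0 hrel _ Dx _ gam prox dl t t1.
case: hB => hnm [hconv [hlsc [Dsub [Xsub [hgrad [hcont [K0 hsc]]]]]]].
set a := x t.+1; set b := x t.
have Da := Dx t.+1; have Db := Dx t.
have haf : h a \is a fin_num by have [] := hgrad a Da.
have hbf : h b \is a fin_num by have [] := hgrad b Db.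
have hs0 := hgrad _ (Dx 0%N).
set g := gradf b; set gm := gamma t.
have [Xa Hp] := prox t t1.
rewrite -/a -/b -/g -/gm in Xa Hp.
set v := b - a.
set ga := gradh a; set gb := gradh b.
have FO : pair gb v - pair ga v <= gm * pair g v.
  apply/ler_addgt0Pr => eps eps0.
  have [lam [lam0 lam1 hwf Hd]] := dirder hconv hnm hlsc hs0 hgrad hcont Da hbf eps0.
  set w := a + lam *: (b - a) in hwf Hd.
  have Xw : X w.
    have -> : w = lam *: b + (1 - lam) *: a by apply/rowP => i; rewrite /w !mxE; ring.
    by apply: convE => //; [exact: Dsub | rewrite ltW].
  have := Hp w Xw; rewrite /breg.
  have e1 : b - w = (1 - lam) *: v by apply/rowP => i; rewrite /w /v !mxE; ring.
  have e2 : w - b = - ((1 - lam) *: v) by apply/rowP => i; rewrite /w /v !mxE; ring.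
  have e3 : a - b = - v by rewrite /v opprB.
  rewrite e1 e2 e3 !pairNr !pairZr !pairNl !pairZl -/ga -/gb -/v.
  rewrite -/v -/ga in Hd.
  set Pg := pair g v; set Pga := pair ga v; set Pgb := pair gb v.
  set hw := fine (h w) in Hd *; set ha := fine (h a) in Hd *; set hb := fine (h b).
  move=> H.
  rewrite -/Pga in Hd; have H2 : lam * (Pgb - Pga - gm * Pg - eps) <= 0 by nra.
  have := H2; rewrite pmulr_rle0 //; lra.
have Dab : 0 <= breg h gradh a b.
  have := hsc b a Db Da; rewrite /breg -(fineK haf) -(fineK hbf) -!EFinD lee_fin.
  have := sqr_ge0 (nrm (a - b)); have : 0 <= K / 2 by rewrite divr_ge0 // ltW.
  move=> k2 n2 H. have : 0 <= K / 2 * nrm (a - b) ^+ 2 by rewrite mulr_ge0.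
  lra.
have Dba : 0 <= breg h gradh b a.
  have := hsc a b Da Db; rewrite /breg -(fineK haf) -(fineK hbf) -!EFinD lee_fin.
  have := sqr_ge0 (nrm (b - a)); have : 0 <= K / 2 by rewrite divr_ge0 // ltW.
  move=> k2 n2 H. have : 0 <= K / 2 * nrm (b - a) ^+ 2 by rewrite mulr_ge0.
  lra.
set S := breg h gradh b a + breg h gradh a b.
have ES : S = pair gb v - pair ga v.
  have e3 : a - b = - v by rewrite /v opprB.
  rewrite /S /breg -/v e3 pairNr -/ga -/gb; lra.
have gm0 : 0 <= gm by rewrite /gm gam // invr_ge0 sqrtr_ge0.
have [_ Hrc] := hrel b a Db (Xsub a Xa).
rewrite -/g -/v in Hrc.
have S0 : 0 <= S by rewrite /S addr_ge0.
have HS : S <= gm * G * Num.sqrt (2 * S).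
  have : Num.sqrt (2 * breg h gradh a b) <= Num.sqrt (2 * S).
    rewrite ler_sqrt ?mulr_ge0 //; rewrite /S; lra.
  move=> Hq; rewrite ES; apply: le_trans FO _.
  rewrite -mulrA; apply: ler_wpM2l => //.
  apply: le_trans Hrc _; apply: ler_wpM2l; [exact: ltW | rewrite -ES; exact: Hq].
have S2 : S <= 2 * (gm * G) ^+ 2.
  move: HS; rewrite sqrtrM ?ler0n //.
  have s2 := sqr_sqrtr (ler0n R 2).
  have s2p := sqrtr_ge0 (2%:R : R).
  have sS := sqr_sqrtr S0.
  have sSp := sqrtr_ge0 S.
  set q2 := Num.sqrt 2%:R in s2 s2p *; set sq := Num.sqrt S in sS sSp *.
  have c0 : 0 <= gm * G by rewrite mulr_ge0 // ltW.
  set c := gm * G in c0 *.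
  rewrite -sS => H.
  have := sqr_ge0 (c * q2 - sq).
  nra.
rewrite (dl t t1) -/a -/b -/S -/gm.
have [->|gmn0] := eqVneq gm 0.
  by rewrite invr0 mulr0 expr0n /= mulr_ge0 // sqr_ge0.
have gmp : 0 < gm by rewrite lt_def gmn0 gm0.
rewrite expr_div_n sqr_sqrtr // ler_pdivrMr ?exprn_gt0 //.
move: S2; rewrite exprMn; lra.
Qed.
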